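(* Let $I\subset[0,\infty)$ be an interval, let $a,b\in I^\circ$ with $a<b$, and let $f:I\to\mathbb{R}$ be twice differentiable on $I^\circ$ with $f''\in L^1([a,b])$. Assume $|f''|$ is $h$-convex on $[a,b]$. Then $$\left|\frac{1}{b-a}\int_a^b f(x)\,dx-f\Big(\frac{a+b}{2}\Big)\right|\le (b-a)^2\,\frac{|f''(a)|+|f''(b)|}{2}\int_0^1 m(t)h(t)\,dt,$$ where $m(t)=t^2$ for $t\in[0,\frac12)$ and $m(t)=(1-t)^2$ for $t\in[\frac12,1]$.
   Context: Let $J$ be an interval with $(0,1)\subseteq J$ and $h:J\to\mathbb{R}$ a non-negative function, not identically zero, which is Lebesgue integrable on $(0,1)$. A non-negative function $g$ defined on an interval $K$ is called $h$-convex on $K$ if for all $x,y\in K$ and all $t\in(0,1)$: $g(tx+(1-t)y)\le h(t)g(x)+h(1-t)g(y)$. $I^\circ$ denotes the interior of $I$. *)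

(* Defs.v *)
From Stdlib Require Import Reals Lra List.
Open Scope R_scope.

Definition is_interval (I : R -> Prop) : Prop :=
  forall x y z, I x -> I z -> x <= y <= z -> I y.

Definition h_convex (h g : R -> R) (K : R -> Prop) : Prop :=
  (forall x, K x -> 0 <= g x) /\
  forall x y t, K x -> K y -> 0 < t < 1 ->
    g (t * x + (1 - t) * y) <= h t * g x + h (1 - t) * g y.

(* ---- Henstock-Kurzweil (gauge) integral on [a,b] ----
   A tagged division of [a,b] is a list of (tag, right endpoint) pairs;
   the left endpoint of each piece is the previous right endpoint. *)
Fixpoint fine_tdiv (delta : R -> R) (a b : R) (l : list (R * R)) : Prop :=
  match l with
  | nil => a = b
  | (t, c) :: l' =>
      a < c /\ a <= t <= c /\ t - delta t < a /\ c < t + delta t /\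
      fine_tdiv delta c b l'
  end.

Fixpoint rsum (f : R -> R) (a : R) (l : list (R * R)) : R :=
  match l with
  | nil => 0
  | (t, c) :: l' => f t * (c - a) + rsum f c l'
  end.

Definition HK_integral (f : R -> R) (a b v : R) : Prop :=
  forall eps, 0 < eps ->
    exists delta : R -> R, (forall x, 0 < delta x) /\
      forall l, fine_tdiv delta a b l -> Rabs (rsum f a l - v) < eps.

(* Lebesgue integrability on [a,b] = absolute gauge integrability
   (a classical theorem); the Lebesgue integral then equals the gauge integral. *)
Definition lebesgue_integrable (f : R -> R) (a b : R) : Prop :=
  (exists v, HK_integral f a b v) /\
  (exists w, HK_integral (fun x => Rabs (f x)) a b w).

Definition m_fun (t : R) : R :=
  if Rlt_dec t (1/2) then t ^ 2 else (1 - t) ^ 2.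

(* Main.v *)
Require Import Defs.
From Stdlib Require Import Reals Lra Lia List Classical ClassicalEpsilon FunctionalExtensionality.
Open Scope R_scope.

Lemma gauge_choice (P : R -> R -> Prop) :
  (forall x, exists d, 0 < d /\ P x d) ->
  exists D : R -> R, forall x, 0 < D x /\ P x (D x).
Proof.
  intros H.
  exists (fun x => proj1_sig (constructive_indefinite_description _ (H x))).
  intros x. exact (proj2_sig (constructive_indefinite_description _ (H x))).
Qed.

Lemma fine_le_ab d l : forall a b, fine_tdiv d a b l -> a <= b.
Proof.
  induction l as [|[t c] l IH]; simpl; intros a b H.
  - lra.
  - destruct H as (H1 & H2 & H3 & H4 & H5). apply IH in H5. lra.
Qed.

Lemma fine_mono d d' l : (forall x, d x <= d' x) ->
  forall a b, fine_tdiv d a b l -> fine_tdiv d' a b l.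
Proof.
  intros Hd; induction l as [|[t c] l IH]; simpl; intros a b H.
  - exact H.
  - destruct H as (H1 & H2 & H3 & H4 & H5). specialize (Hd t).
    repeat split; try lra. apply IH; auto.
Qed.

Lemma fine_app d l1 : forall a c b l2, fine_tdiv d a c l1 -> fine_tdiv d c b l2 ->
  fine_tdiv d a b (l1 ++ l2).
Proof.
  induction l1 as [|[t c'] l IH]; simpl; intros a c b l2 H1 H2.
  - subst; auto.
  - destruct H1 as (H1 & H3 & H4 & H5 & H6). repeat split; try lra.
    eapply IH; eauto.
Qed.

Lemma rsum_app d f l1 : forall a c l2, fine_tdiv d a c l1 ->
  rsum f a (l1 ++ l2) = rsum f a l1 + rsum f c l2.
Proof.
  induction l1 as [|[t c'] l IH]; simpl; intros a c l2 H1.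
  - subst; ring.
  - destruct H1 as (H1 & H3 & H4 & H5 & H6). rewrite (IH _ _ _ H6). ring.
Qed.

Lemma rsum_ext f g l : forall a, (forall x, f x = g x) -> rsum f a l = rsum g a l.
Proof.
  induction l as [|[t c] l IH]; simpl; intros a H; auto.
  rewrite H, IH; auto.
Qed.

Lemma cousin d a b : (forall x, 0 < d x) -> a <= b -> exists l, fine_tdiv d a b l.
Proof.
  intros Hd Hab.
  set (E := fun x => a <= x <= b /\ exists l, fine_tdiv d a x l).
  assert (HbE : bound E) by (exists b; intros x [Hx _]; lra).
  assert (HaE : exists x, E x) by (exists a; split; [lra| exists nil; simpl; auto]).
  destruct (completeness E HbE HaE) as [s [Hub Hlub]].
  assert (Has : a <= s) by (apply Hub; split; [lra| exists nil; simpl; auto]).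
  assert (Hsb : s <= b) by (apply Hlub; intros x [Hx _]; lra).
  assert (Hx : exists x, E x /\ s - d s < x).
  { apply NNPP; intros Hn.
    assert (s <= s - d s).
    { apply Hlub. intros x Ex. apply Rnot_lt_le. intros Hlt. apply Hn. exists x; auto. }
    specialize (Hd s); lra. }
  destruct Hx as [x [[Hx [lx Hlx]] Hxs]].
  assert (Hxs' : x <= s) by (apply Hub; split; auto; exists lx; auto).
  set (y := Rmin b (s + d s / 2)).
  assert (Hy1 : y <= b) by apply Rmin_l.
  assert (Hy2 : y <= s + d s / 2) by apply Rmin_r.
  assert (Hy3 : s <= y) by (unfold y; apply Rmin_glb; specialize (Hd s); lra).
  destruct (Req_dec x y) as [Exy|Nxy].
  - assert (s = b).
    { assert (x = s) by lra. subst y. unfold Rmin in Exy. destruct (Rle_dec b (s + d s / 2)); specialize (Hd s); lra. }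
    exists lx. replace b with x by lra. auto.
  - assert (Ey : E y).
    { split; [lra|]. exists (lx ++ (s, y) :: nil). eapply fine_app; eauto.
      simpl. specialize (Hd s). repeat split; try lra. }
    assert (y <= s) by (apply Hub; auto).
    assert (Hsb' : s = b).
    { unfold y, Rmin in *. destruct (Rle_dec b (s + d s / 2)); specialize (Hd s); lra. }
    assert (Hyb : y = b) by lra. rewrite <- Hyb. destruct Ey as [_ [l Hl]]. exists l; auto.
Qed.

Lemma abs_le_iff x e : Rabs x <= e <-> -e <= x <= e.
Proof. unfold Rabs; destruct (Rcase_abs x); split; intros; lra. Qed.

Lemma abs_lt_iff x e : Rabs x < e <-> -e < x < e.
Proof. unfold Rabs; destruct (Rcase_abs x); split; intros; lra. Qed.

Lemma HK_ext f g a b v : (forall x, f x = g x) -> HK_integral f a b v -> HK_integral g a b v.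
Proof.
  intros Hfg H eps Heps. destruct (H eps Heps) as [d [Hd Hl]].
  exists d; split; auto. intros l Hl'. rewrite <- (rsum_ext f g); auto.
Qed.

Lemma rsum_plus f g l : forall a, rsum (fun x => f x + g x) a l = rsum f a l + rsum g a l.
Proof. induction l as [|[t c] l IH]; simpl; intros; [ring|rewrite IH; ring]. Qed.

Lemma rsum_scal c f l : forall a, rsum (fun x => c * f x) a l = c * rsum f a l.
Proof. induction l as [|[t c'] l IH]; simpl; intros; [ring|rewrite IH; ring]. Qed.

Lemma HK_plus f g a b v w : HK_integral f a b v -> HK_integral g a b w ->
  HK_integral (fun x => f x + g x) a b (v + w).
Proof.
  intros Hf Hg eps Heps.
  destruct (Hf (eps/2)) as [d1 [Hd1 H1]]; [lra|].
  destruct (Hg (eps/2)) as [d2 [Hd2 H2]]; [lra|].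
  exists (fun x => Rmin (d1 x) (d2 x)); split.
  - intros x; apply Rmin_glb_lt; auto.
  - intros l Hl. rewrite rsum_plus.
    assert (A1 := H1 l (fine_mono _ _ _ (fun x => Rmin_l _ _) _ _ Hl)).
    assert (A2 := H2 l (fine_mono _ _ _ (fun x => Rmin_r _ _) _ _ Hl)).
    apply abs_lt_iff in A1; apply abs_lt_iff in A2; apply abs_lt_iff; lra.
Qed.

Lemma HK_scal c f a b v : HK_integral f a b v ->
  HK_integral (fun x => c * f x) a b (c * v).
Proof.
  intros Hf eps Heps.
  destruct (Hf (eps/(Rabs c + 1))) as [d [Hd H1]].
  { apply Rdiv_lt_0_compat; auto. pose proof (Rabs_pos c); lra. }
  exists d; split; auto. intros l Hl. rewrite rsum_scal.
  replace (c * rsum f a l - c * v) with (c * (rsum f a l - v)) by ring.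
  rewrite Rabs_mult. specialize (H1 l Hl).
  pose proof (Rabs_pos c).
  apply Rle_lt_trans with (Rabs c * (eps / (Rabs c + 1))).
  - apply Rmult_le_compat_l; lra.
  - apply Rlt_le_trans with ((Rabs c + 1) * (eps / (Rabs c + 1))).
    + apply Rmult_lt_compat_r; [apply Rdiv_lt_0_compat|]; lra.
    + right; field; lra.
Qed.

Definition straddle (P g : R -> R) (a b : R) : Prop :=
  forall x, a <= x <= b -> forall eps, 0 < eps -> exists d, 0 < d /\
    forall u v, a <= u -> u <= x -> x <= v -> v <= b -> x - d < u -> v < x + d ->
      Rabs (P v - P u - g x * (v - u)) <= eps * (v - u).

Lemma ftc_gauge P g a b : a <= b -> straddle P g a b -> HK_integral g a b (P b - P a).
Proof.
  intros Hab HS eps Heps.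
  set (e := eps / (b - a + 1)).
  assert (He : 0 < e) by (apply Rdiv_lt_0_compat; lra).
  destruct (gauge_choice (fun x d => a <= x <= b -> forall u v, a <= u -> u <= x -> x <= v -> v <= b -> x - d < u -> v < x + d ->
      Rabs (P v - P u - g x * (v - u)) <= e * (v - u))) as [D HD].
  { intros x. destruct (classic (a <= x <= b)) as [Hx|Hx].
    - destruct (HS x Hx e He) as [d [Hd Hd']]. exists d; split; auto.
    - exists 1; split; [lra| intros; contradiction]. }
  exists D; split; [intros x; apply HD|].
  assert (Hind : forall l a', a <= a' -> fine_tdiv D a' b l ->
     Rabs (rsum g a' l - (P b - P a')) <= e * (b - a')).
  { induction l as [|[t c] l IH]; simpl; intros a' Ha' Hl.
    - subst. replace (0 - (P b - P b)) with 0 by ring. rewrite Rabs_R0. lra.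
    - destruct Hl as (H1 & H2 & H3 & H4 & H5).
      pose proof (fine_le_ab _ _ _ _ H5) as Hcb.
      assert (A1 := proj2 (HD t) (ltac:(lra)) a' c ltac:(lra) ltac:(lra) ltac:(lra) ltac:(lra) H3 H4).
      assert (A2 := IH c ltac:(lra) H5).
      apply abs_le_iff in A1; apply abs_le_iff in A2; apply abs_le_iff; lra. }
  intros l Hl. specialize (Hind l a ltac:(lra) Hl).
  eapply Rle_lt_trans; [exact Hind|].
  assert (E1 : e * (b - a + 1) = eps) by (unfold e; field; lra).
  assert (E2 : e * (b - a + 1) = e * (b - a) + e) by ring. lra.
Qed.

Lemma HK_mono g k a b G K : a <= b -> HK_integral g a b G -> HK_integral k a b K ->
  (forall x, a <= x <= b -> Rabs (g x) <= k x) -> Rabs G <= K.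
Proof.
  intros Hab Hg Hk Hgk.
  assert (Hind : forall d l a', a <= a' -> fine_tdiv d a' b l -> Rabs (rsum g a' l) <= rsum k a' l).
  { intros d; induction l as [|[t c] l IH]; simpl; intros a' Ha' Hl.
    - rewrite Rabs_R0; lra.
    - destruct Hl as (H1 & H2 & H3 & H4 & H5).
      pose proof (fine_le_ab _ _ _ _ H5) as Hcb.
      specialize (IH c ltac:(lra) H5). specialize (Hgk t ltac:(lra)).
      eapply Rle_trans; [apply Rabs_triang|]. rewrite Rabs_mult.
      rewrite (Rabs_right (c - a')) by lra.
      apply Rplus_le_compat; auto. apply Rmult_le_compat_r; lra. }
  apply Rnot_lt_le; intros Hlt.
  set (eps := (Rabs G - K) / 3).
  assert (He : 0 < eps) by (unfold eps; lra).
  destruct (Hg eps He) as [d1 [Hd1 H1]].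
  destruct (Hk eps He) as [d2 [Hd2 H2]].
  destruct (cousin (fun x => Rmin (d1 x) (d2 x)) a b) as [l Hl]; auto.
  { intros x; apply Rmin_glb_lt; auto. }
  assert (A1 := H1 l (fine_mono _ _ _ (fun x => Rmin_l _ _) _ _ Hl)).
  assert (A2 := H2 l (fine_mono _ _ _ (fun x => Rmin_r _ _) _ _ Hl)).
  assert (A3 := Hind _ l a ltac:(lra) Hl).
  assert (Rabs G <= Rabs (rsum g a l) + Rabs (rsum g a l - G)).
  { replace G with (rsum g a l - (rsum g a l - G)) at 1 by ring.
    eapply Rle_trans; [apply Rabs_triang|]. rewrite Rabs_Ropp. lra. }
  apply abs_lt_iff in A2. unfold eps in *; lra.
Qed.

Fixpoint refl (a : R) (l : list (R * R)) : list (R * R) :=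
  match l with
  | nil => nil
  | (t, c) :: l' => refl c l' ++ ((1 - t, 1 - a) :: nil)
  end.

Lemma refl_fine d d2 (Hd : forall t, d2 (1 - t) = d t) l :
  forall a b, fine_tdiv d a b l -> fine_tdiv d2 (1 - b) (1 - a) (refl a l).
Proof.
  induction l as [|[t c] l IH]; simpl; intros a b Hl.
  - subst; auto.
  - destruct Hl as (H1 & H2 & H3 & H4 & H5).
    eapply fine_app; [apply IH; eauto|]. simpl. rewrite Hd. repeat split; lra.
Qed.

Lemma refl_rsum d k k2 (Hk : forall t, k2 (1 - t) = k t) l :
  forall a b, fine_tdiv d a b l -> rsum k2 (1 - b) (refl a l) = rsum k a l.
Proof.
  induction l as [|[t c] l IH]; simpl; intros a b Hl.
  - auto.
  - destruct Hl as (H1 & H2 & H3 & H4 & H5).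
    rewrite (rsum_app (fun s => d (1 - s)) _ _ _ (1 - c)).
    + rewrite (IH c b H5). simpl. rewrite Hk. ring.
    + apply refl_fine with d; auto. intros; f_equal; ring.
Qed.

Lemma HK_refl k v : HK_integral k 0 1 v -> HK_integral (fun s => k (1 - s)) 0 1 v.
Proof.
  intros Hk eps Heps. destruct (Hk eps Heps) as [d [Hd H1]].
  exists (fun s => d (1 - s)); split; [intros; apply Hd|].
  intros l Hl.
  assert (F := refl_fine (fun s => d (1 - s)) d (fun t => eq_refl) l 0 1 Hl).
  replace (1 - 1) with 0 in F by ring. replace (1 - 0) with 1 in F by ring.
  specialize (H1 _ F).
  rewrite <- (refl_rsum (fun s => d (1 - s)) (fun s => k (1 - s)) k (fun t => eq_refl) l 0 1 Hl).
  replace (1 - 1) with 0 by ring. exact H1.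
Qed.

Fixpoint Dmin (dn : nat -> R -> R) (n : nat) (x : R) : R :=
  match n with
  | O => dn O x
  | S k => Rmin (Dmin dn k x) (dn (S k) x)
  end.

Lemma Dmin_pos dn : (forall n x, 0 < dn n x) -> forall n x, 0 < Dmin dn n x.
Proof. intros H n x; induction n; simpl; auto. apply Rmin_glb_lt; auto. Qed.

Lemma Dmin_le dn : forall n x, Dmin dn n x <= dn n x.
Proof. intros [|n] x; simpl; [lra| apply Rmin_r]. Qed.

Lemma Dmin_anti dn : forall n m x, (n <= m)%nat -> Dmin dn m x <= Dmin dn n x.
Proof.
  intros n m x Hnm; induction Hnm; [lra|].
  simpl. eapply Rle_trans; [apply Rmin_l|auto].
Qed.

Lemma cauchy_int f a b : a <= b ->
  (forall eps, 0 < eps -> exists d, (forall x, 0 < d x) /\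
     forall l1 l2, fine_tdiv d a b l1 -> fine_tdiv d a b l2 ->
       Rabs (rsum f a l1 - rsum f a l2) <= eps) ->
  exists v, HK_integral f a b v.
Proof.
  intros Hab H.
  assert (Hn : forall n : nat, exists d, (forall x, 0 < d x) /\
     forall l1 l2, fine_tdiv d a b l1 -> fine_tdiv d a b l2 ->
       Rabs (rsum f a l1 - rsum f a l2) <= / (INR n + 1)).
  { intros n; apply H. apply Rinv_0_lt_compat. pose proof (pos_INR n); lra. }
  set (dn := fun n => proj1_sig (constructive_indefinite_description _ (Hn n))).
  assert (Hdn : forall n, (forall x, 0 < dn n x) /\
     forall l1 l2, fine_tdiv (dn n) a b l1 -> fine_tdiv (dn n) a b l2 ->
       Rabs (rsum f a l1 - rsum f a l2) <= / (INR n + 1)).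
  { intros n; exact (proj2_sig (constructive_indefinite_description _ (Hn n))). }
  assert (HD := Dmin_pos dn (fun n => proj1 (Hdn n))).
  assert (Hl : forall n, exists l, fine_tdiv (Dmin dn n) a b l).
  { intros n; apply cousin; auto. }
  set (ln := fun n => proj1_sig (constructive_indefinite_description _ (Hl n))).
  assert (Hln : forall n, fine_tdiv (Dmin dn n) a b (ln n)).
  { intros n; exact (proj2_sig (constructive_indefinite_description _ (Hl n))). }
  set (S := fun n => rsum f a (ln n)).
  assert (Key : forall N n l, (N <= n)%nat -> fine_tdiv (Dmin dn N) a b l ->
            Rabs (rsum f a l - S n) <= / (INR N + 1)).
  { intros N n l HNn Hl'. apply (proj2 (Hdn N)).
    - eapply fine_mono; [|exact Hl']. intros; apply Dmin_le.
    - eapply fine_mono; [|apply Hln]. intros x.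
      eapply Rle_trans; [apply Dmin_anti; exact HNn| apply Dmin_le]. }
  assert (Hinv : forall N : nat, (0 < N)%nat -> / (INR N + 1) < / INR N).
  { intros N HN. apply lt_0_INR in HN. apply Rinv_lt_contravar; nra. }
  assert (HC : Cauchy_crit S).
  { intros eps Heps. destruct (archimed_cor1 eps Heps) as [N [HN1 HN2]].
    exists N. intros n m Hn' Hm'. unfold R_dist.
    specialize (Key N m (ln n) Hm' ltac:(eapply fine_mono; [|apply Hln]; intros; apply Dmin_anti; lia)).
    specialize (Hinv N HN2). unfold S at 1. lra. }
  destruct (R_complete S HC) as [L HL].
  exists L. intros eps Heps.
  destruct (archimed_cor1 (eps/2) ltac:(lra)) as [N [HN1 HN2]].
  destruct (HL (eps/2) ltac:(lra)) as [M HM].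
  exists (Dmin dn N); split; auto.
  intros l Hl'.
  specialize (HM (max N M) ltac:(lia)). unfold R_dist in HM.
  specialize (Key N (max N M) l ltac:(lia) Hl').
  specialize (Hinv N HN2).
  apply abs_le_iff in Key; apply abs_lt_iff in HM; apply abs_lt_iff; lra.
Qed.

Lemma sub_cauchy g a b w u v : HK_integral g a b w -> a <= u -> u <= v -> v <= b ->
  forall eps, 0 < eps -> exists d, (forall x, 0 < d x) /\
    forall l1 l2, fine_tdiv d u v l1 -> fine_tdiv d u v l2 ->
      Rabs (rsum g u l1 - rsum g u l2) <= eps.
Proof.
  intros Hg Hau Huv Hvb eps Heps.
  destruct (Hg (eps/2) ltac:(lra)) as [d [Hd H1]].
  exists d; split; auto.
  destruct (cousin d a u Hd Hau) as [p0 Hp0].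
  destruct (cousin d v b Hd Hvb) as [r0 Hr0].
  assert (K : forall l, fine_tdiv d u v l ->
     Rabs (rsum g a p0 + rsum g u l + rsum g v r0 - w) < eps/2).
  { intros l Hl. specialize (H1 (p0 ++ l ++ r0)).
    rewrite (rsum_app d g p0 a u) in H1 by auto.
    rewrite (rsum_app d g l u v) in H1 by auto.
    rewrite <- Rplus_assoc in H1. apply H1.
    eapply fine_app; [exact Hp0|]. eapply fine_app; eauto. }
  intros l1 l2 Hl1 Hl2. specialize (K l1 Hl1) as K1. specialize (K l2 Hl2) as K2.
  apply abs_lt_iff in K1; apply abs_lt_iff in K2; apply abs_le_iff; lra.
Qed.

Lemma split_div d c : (forall x, x <> c -> d x <= Rabs (x - c)) ->
  forall l a b, a < c < b -> fine_tdiv d a b l ->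
  exists l1 l2, fine_tdiv d a c l1 /\ fine_tdiv d c b l2 /\
    forall f, rsum f a l = rsum f a l1 + rsum f c l2.
Proof.
  intros Hd; induction l as [|[t v] l IH]; simpl; intros a b Hacb Hl.
  - lra.
  - destruct Hl as (H1 & H2 & H3 & H4 & H5).
    destruct (Rlt_le_dec v c) as [Hvc|Hvc].
    + pose proof (fine_le_ab _ _ _ _ H5).
      destruct (IH v b ltac:(lra) H5) as (l1 & l2 & A1 & A2 & A3).
      exists ((t, v) :: l1), l2. simpl. repeat split; auto; try lra.
      intros f; rewrite A3; ring.
    + destruct (Req_dec v c) as [Evc|Nvc].
      * subst v. exists ((t, c) :: nil), l. simpl. repeat split; auto; try lra.
        intros f; ring.
      * assert (Htc : t = c).
        { apply NNPP; intros Hn. specialize (Hd t Hn).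
          apply Rle_not_lt in Hd; apply Hd. apply abs_lt_iff; lra. }
        subst t. exists ((c, c) :: nil), ((c, v) :: l). simpl.
        repeat split; auto; try lra.
        intros f; ring.
Qed.

Lemma cousin_ind (Phi : R -> R -> Prop) a b : a <= b ->
  (forall u c v, a <= u -> u < c -> c < v -> v <= b -> Phi u c -> Phi c v -> Phi u v) ->
  (forall x, a <= x <= b -> exists d, 0 < d /\ forall u v, a <= u -> u <= x -> x <= v -> v <= b ->
      x - d < u -> v < x + d -> Phi u v) ->
  Phi a b.
Proof.
  intros Hab Hadd Hloc.
  destruct (gauge_choice (fun x d => a <= x <= b -> forall u v, a <= u -> u <= x -> x <= v -> v <= b ->
      x - d < u -> v < x + d -> Phi u v)) as [D HD].
  { intros x. destruct (classic (a <= x <= b)) as [Hx|Hx].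
    - destruct (Hloc x Hx) as [d [Hd Hd']]. exists d; split; auto.
    - exists 1; split; [lra| intros; contradiction]. }
  destruct (cousin D a b (fun x => proj1 (HD x)) Hab) as [l Hl].
  assert (Hind : forall l a', a <= a' -> fine_tdiv D a' b l -> Phi a' b).
  { induction l0 as [|[t c] l0 IH]; simpl; intros a' Ha' Hl'.
    - subst. pose proof (proj1 (HD b)). apply (proj2 (HD b)); lra.
    - destruct Hl' as (H1 & H2 & H3 & H4 & H5).
      pose proof (fine_le_ab _ _ _ _ H5) as Hcb.
      assert (Pac : Phi a' c) by (apply (proj2 (HD t)); lra).
      destruct (Req_dec c b) as [Ecb|Ncb].
      + subst; auto.
      + apply Hadd with c; auto; try lra. apply IH; auto; lra. }
  apply (Hind l a); auto; lra.
Qed.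

Lemma fine_nil d u l : fine_tdiv d u u l -> l = nil.
Proof.
  destruct l as [|[t c] l]; simpl; auto. intros (H1 & _ & _ & _ & H5).
  apply fine_le_ab in H5; lra.
Qed.

Lemma rsum_abs_bound d f k l : forall a' b, fine_tdiv d a' b l ->
  (forall t, a' <= t <= b -> Rabs (f t) <= k t) -> Rabs (rsum f a' l) <= rsum k a' l.
Proof.
  induction l as [|[t c] l IH]; simpl; intros a' b Hl Hfk.
  - rewrite Rabs_R0; lra.
  - destruct Hl as (H1 & H2 & H3 & H4 & H5).
    pose proof (fine_le_ab _ _ _ _ H5) as Hcb.
    specialize (IH c b H5 ltac:(intros; apply Hfk; lra)). specialize (Hfk t ltac:(lra)).
    eapply Rle_trans; [apply Rabs_triang|]. rewrite Rabs_mult.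
    rewrite (Rabs_right (c - a')) by lra.
    apply Rplus_le_compat; auto. apply Rmult_le_compat_r; lra.
Qed.

Lemma HK_mult g m a b w W : a <= b -> HK_integral g a b w ->
  HK_integral (fun x => Rabs (g x)) a b W ->
  (forall x, a <= x <= b -> forall eta, 0 < eta -> exists rho, 0 < rho /\
     forall t, a <= t <= b -> Rabs (t - x) < rho -> Rabs (m t - m x) <= eta) ->
  exists v, HK_integral (fun x => m x * g x) a b v.
Proof.
  intros Hab Hg HW Hm.
  apply cauchy_int; auto. intros eps Heps.
  set (e1 := eps / (2 * (b - a + 1))).
  set (eta := eps / (4 * (Rabs W + 1))).
  pose proof (Rabs_pos W) as HWp.
  assert (He1 : 0 < e1) by (unfold e1; apply Rdiv_lt_0_compat; lra).
  assert (Heta : 0 < eta) by (unfold eta; apply Rdiv_lt_0_compat; lra).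
  set (mg := fun x => m x * g x).
  set (ag := fun x => Rabs (g x)).
  set (Phi := fun u v => exists d, (forall x, 0 < d x) /\ forall P Q,
      fine_tdiv d u v P -> fine_tdiv d u v Q ->
      Rabs (rsum mg u P - rsum mg u Q) <= e1 * (v - u) + eta * (rsum ag u P + rsum ag u Q)).
  assert (HPhi : Phi a b).
  { apply cousin_ind; auto.
    - intros u c v Hau Huc Hcv Hvb [d1 [Hd1 H1]] [d2 [Hd2 H2]].
      set (d3 := fun x => if Req_EM_T x c then 1 else Rabs (x - c)).
      assert (Hd3 : forall x, 0 < d3 x).
      { intros x; unfold d3; destruct (Req_EM_T x c); [lra|].
        apply Rabs_pos_lt; lra. }
      exists (fun x => Rmin (Rmin (d1 x) (d2 x)) (d3 x)); split.
      { intros x; repeat apply Rmin_glb_lt; auto. }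
      assert (Hsp : forall x, x <> c -> Rmin (Rmin (d1 x) (d2 x)) (d3 x) <= Rabs (x - c)).
      { intros x Hx. eapply Rle_trans; [apply Rmin_r|]. unfold d3.
        destruct (Req_EM_T x c); [contradiction|lra]. }
      assert (M1 : forall x, Rmin (Rmin (d1 x) (d2 x)) (d3 x) <= d1 x).
      { intros x; eapply Rle_trans; [apply Rmin_l| apply Rmin_l]. }
      assert (M2 : forall x, Rmin (Rmin (d1 x) (d2 x)) (d3 x) <= d2 x).
      { intros x; eapply Rle_trans; [apply Rmin_l| apply Rmin_r]. }
      intros P Q HP HQ.
      destruct (split_div _ c Hsp P u v ltac:(lra) HP) as (P1 & P2 & HP1 & HP2 & HPs).
      destruct (split_div _ c Hsp Q u v ltac:(lra) HQ) as (Q1 & Q2 & HQ1 & HQ2 & HQs).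
      rewrite !HPs, !HQs.
      specialize (H1 P1 Q1 (fine_mono _ _ _ M1 _ _ HP1) (fine_mono _ _ _ M1 _ _ HQ1)).
      specialize (H2 P2 Q2 (fine_mono _ _ _ M2 _ _ HP2) (fine_mono _ _ _ M2 _ _ HQ2)).
      apply abs_le_iff in H1; apply abs_le_iff in H2; apply abs_le_iff; lra.
    - intros x Hx. destruct (Hm x Hx eta Heta) as [rho [Hrho Hr]].
      exists rho; split; auto. intros u v Hau Hux Hxv Hvb Hu Hv.
      destruct (Req_dec u v) as [Euv|Nuv].
      + subst v. exists (fun _ => 1); split; [intros; lra|].
        intros P Q HP HQ. rewrite (fine_nil _ _ _ HP), (fine_nil _ _ _ HQ). simpl.
        rewrite Rminus_0_r, Rabs_R0. lra.
      + set (e2 := e1 * (v - u) / (Rabs (m x) + 1)).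
        pose proof (Rabs_pos (m x)) as Hmx.
        assert (He2 : 0 < e2) by (unfold e2; apply Rdiv_lt_0_compat; [apply Rmult_lt_0_compat|]; lra).
        destruct (sub_cauchy g a b w u v Hg Hau ltac:(lra) Hvb e2 He2) as [d [Hd H1]].
        exists d; split; auto.
        assert (Dec : forall P, fine_tdiv d u v P ->
           Rabs (rsum mg u P - m x * rsum g u P) <= eta * rsum ag u P).
        { intros P HP.
          rewrite (rsum_ext mg (fun t => m x * g t + (m t - m x) * g t)) by (intros; unfold mg; ring).
          rewrite rsum_plus, rsum_scal.
          replace (m x * rsum g u P + rsum (fun t => (m t - m x) * g t) u P - m x * rsum g u P)
            with (rsum (fun t => (m t - m x) * g t) u P) by ring.
          rewrite <- rsum_scal.
          apply rsum_abs_bound with d v; auto.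
          intros t Ht. rewrite Rabs_mult. unfold ag.
          apply Rmult_le_compat_r; [apply Rabs_pos|].
          apply Hr; [lra|]. apply abs_lt_iff; lra. }
        intros P Q HP HQ.
        specialize (Dec P HP) as DP. specialize (Dec Q HQ) as DQ.
        specialize (H1 P Q HP HQ).
        assert (Rabs (m x * rsum g u P - m x * rsum g u Q) <= e1 * (v - u)).
        { rewrite <- Rmult_minus_distr_l, Rabs_mult.
          apply Rle_trans with (Rabs (m x) * e2).
          - apply Rmult_le_compat_l; auto.
          - unfold e2. apply Rle_trans with ((Rabs (m x) + 1) * (e1 * (v - u) / (Rabs (m x) + 1))).
            + apply Rmult_le_compat_r; [|lra]. left; apply Rdiv_lt_0_compat; [apply Rmult_lt_0_compat|]; lra.
            + right; field; lra. }
        apply abs_le_iff in DP; apply abs_le_iff in DQ; apply abs_le_iff in H; apply abs_le_iff; lra. }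
  destruct HPhi as [d0 [Hd0 H0]].
  destruct (HW 1 ltac:(lra)) as [dW [HdW HW1]].
  exists (fun x => Rmin (d0 x) (dW x)); split.
  { intros x; apply Rmin_glb_lt; auto. }
  intros P Q HP HQ.
  specialize (H0 P Q (fine_mono _ _ _ (fun x => Rmin_l _ _) _ _ HP) (fine_mono _ _ _ (fun x => Rmin_l _ _) _ _ HQ)).
  specialize (HW1 P (fine_mono _ _ _ (fun x => Rmin_r _ _) _ _ HP)) as WP.
  specialize (HW1 Q (fine_mono _ _ _ (fun x => Rmin_r _ _) _ _ HQ)) as WQ.
  apply abs_lt_iff in WP; apply abs_lt_iff in WQ.
  assert (A : eta * (rsum ag a P + rsum ag a Q) <= eta * (2 * (Rabs W + 1))).
  { apply Rmult_le_compat_l; [lra|]. unfold ag. pose proof (Rle_abs W). lra. }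
  assert (B : eta * (2 * (Rabs W + 1)) = eps / 2) by (unfold eta; field; lra).
  assert (C : e1 * (b - a) <= eps / 2).
  { unfold e1. apply Rle_trans with (eps / (2 * (b - a + 1)) * (b - a + 1)).
    - apply Rmult_le_compat_l; [left; apply Rdiv_lt_0_compat|]; lra.
    - right; field; lra. }
  apply abs_le_iff in H0; apply abs_le_iff; unfold mg in *; lra.
Qed.

Lemma deriv_bound F x l : derivable_pt_lim F x l -> forall eps, 0 < eps ->
  exists d, 0 < d /\ forall y, Rabs (y - x) < d -> Rabs (F y - F x - l * (y - x)) <= eps * Rabs (y - x).
Proof.
  intros HF eps Heps. destruct (HF eps Heps) as [del Hdel].
  exists del; split; [apply cond_pos|]. intros y Hy.
  destruct (Req_dec y x) as [E|N].
  - subst. replace (F x - F x - l * (x - x)) with 0 by ring. rewrite Rabs_R0.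
    pose proof (Rabs_pos (x - x)); nra.
  - assert (Hh : y - x <> 0) by lra.
    specialize (Hdel (y - x) Hh Hy). replace (x + (y - x)) with y in Hdel by ring.
    replace (F y - F x - l * (y - x)) with ((y - x) * ((F y - F x) / (y - x) - l)) by (field; auto).
    rewrite Rabs_mult. rewrite Rmult_comm. apply Rmult_le_compat_r; [apply Rabs_pos| lra].
Qed.

Lemma straddle_loc P L Rr x0 l d0 : 0 < d0 ->
  (forall u, x0 - d0 < u <= x0 -> P u = L u) ->
  (forall v, x0 <= v < x0 + d0 -> P v = Rr v) ->
  derivable_pt_lim L x0 l -> derivable_pt_lim Rr x0 l ->
  forall eps, 0 < eps -> exists d, 0 < d /\ forall u v, u <= x0 -> x0 <= v ->
    x0 - d < u -> v < x0 + d -> Rabs (P v - P u - l * (v - u)) <= eps * (v - u).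
Proof.
  intros Hd0 HL HR DL DR eps Heps.
  destruct (deriv_bound L x0 l DL eps Heps) as [d1 [Hd1 H1]].
  destruct (deriv_bound Rr x0 l DR eps Heps) as [d2 [Hd2 H2]].
  exists (Rmin d0 (Rmin d1 d2)); split.
  { repeat apply Rmin_glb_lt; auto. }
  intros u v Hu Hv Hu' Hv'.
  pose proof (Rmin_l d0 (Rmin d1 d2)). pose proof (Rmin_r d0 (Rmin d1 d2)).
  pose proof (Rmin_l d1 d2). pose proof (Rmin_r d1 d2).
  assert (E0 : L x0 = Rr x0) by (rewrite <- HL, <- HR; lra).
  rewrite (HL u) by lra. rewrite (HR v) by lra.
  specialize (H1 u ltac:(apply abs_lt_iff; lra)).
  specialize (H2 v ltac:(apply abs_lt_iff; lra)).
  rewrite (Rabs_left1 (u - x0)) in H1 by lra.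
  rewrite (Rabs_right (v - x0)) in H2 by lra.
  apply abs_le_iff in H1; apply abs_le_iff in H2; apply abs_le_iff. lra.
Qed.

Lemma straddle_of_loc P g a b :
  (forall x, a <= x <= b -> forall eps, 0 < eps -> exists d, 0 < d /\ forall u v, u <= x -> x <= v ->
    x - d < u -> v < x + d -> Rabs (P v - P u - g x * (v - u)) <= eps * (v - u)) ->
  straddle P g a b.
Proof.
  intros H x Hx eps Heps. destruct (H x Hx eps Heps) as [d [Hd H']].
  exists d; split; auto.
Qed.

Lemma m_fun_sym t : m_fun (1 - t) = m_fun t.
Proof.
  unfold m_fun. destruct (Rlt_dec (1 - t) (1/2)); destruct (Rlt_dec t (1/2)); try (exfalso; lra); try ring.
  assert (t = 1/2) by lra. subst. field.
Qed.

Lemma sq_lip s t : 0 <= s -> 0 <= t -> s + t <= 1 -> Rabs (s^2 - t^2) <= Rabs (s - t).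
Proof.
  intros. replace (s^2 - t^2) with ((s - t) * (s + t)) by ring.
  rewrite Rabs_mult. rewrite (Rabs_right (s + t)) by lra.
  pose proof (Rabs_pos (s - t)). nra.
Qed.
Lemma m_fun_lip s t : 0 <= s <= 1 -> 0 <= t <= 1 -> Rabs (m_fun s - m_fun t) <= Rabs (s - t).
Proof.
  intros Hs Ht. unfold m_fun.
  destruct (Rlt_dec s (1/2)); destruct (Rlt_dec t (1/2)).
  - apply sq_lip; lra.
  - eapply Rle_trans; [apply (sq_lip s (1 - t)); lra|].
    rewrite (Rabs_left1 (s - t)) by lra.
    destruct (Rle_dec (s - (1 - t)) 0); [rewrite Rabs_left1 by lra|rewrite Rabs_right by lra]; lra.
  - eapply Rle_trans; [apply (sq_lip (1 - s) t); lra|].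
    rewrite (Rabs_right (s - t)) by lra.
    destruct (Rle_dec (1 - s - t) 0); [rewrite Rabs_left1 by lra|rewrite Rabs_right by lra]; lra.
  - eapply Rle_trans; [apply (sq_lip (1 - s) (1 - t)); lra|].
    replace (1 - s - (1 - t)) with (- (s - t)) by ring. rewrite Rabs_Ropp; lra.
Qed.

Lemma m_fun_nonneg t : 0 <= m_fun t.
Proof. unfold m_fun; destruct (Rlt_dec t (1/2)); apply pow2_ge_0. Qed.

Lemma dpl_eq f x l l' : derivable_pt_lim f x l -> l = l' -> derivable_pt_lim f x l'.
Proof. intros H E; subst; auto. Qed.

Lemma dpl_plus f g x l1 l2 : derivable_pt_lim f x l1 -> derivable_pt_lim g x l2 ->
  derivable_pt_lim (fun t => f t + g t) x (l1 + l2).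
Proof. apply derivable_pt_lim_plus. Qed.

Lemma dpl_minus f g x l1 l2 : derivable_pt_lim f x l1 -> derivable_pt_lim g x l2 ->
  derivable_pt_lim (fun t => f t - g t) x (l1 - l2).
Proof. apply derivable_pt_lim_minus. Qed.

Lemma dpl_mult f g x l1 l2 : derivable_pt_lim f x l1 -> derivable_pt_lim g x l2 ->
  derivable_pt_lim (fun t => f t * g t) x (l1 * g x + f x * l2).
Proof. apply derivable_pt_lim_mult. Qed.

Lemma dpl_const c x : derivable_pt_lim (fun _ => c) x 0.
Proof. apply derivable_pt_lim_const. Qed.

Lemma dpl_id x : derivable_pt_lim (fun t => t) x 1.
Proof. apply derivable_pt_lim_id. Qed.

Lemma dpl_affine f a b t l : derivable_pt_lim f (t * a + (1 - t) * b) l ->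
  derivable_pt_lim (fun s => f (s * a + (1 - s) * b)) t (l * (a - b)).
Proof.
  intros H.
  assert (Hx : derivable_pt_lim (fun s => s * a + (1 - s) * b) t (a - b)).
  { eapply dpl_eq.
    - apply dpl_plus; apply dpl_mult; try apply dpl_id; try apply dpl_const.
      apply dpl_minus; [apply dpl_const| apply dpl_id].
    - cbv beta; ring. }
  exact (derivable_pt_lim_comp _ _ t _ _ Hx H).
Qed.

Lemma m_fun_0 : m_fun 0 = 0.
Proof. unfold m_fun; destruct (Rlt_dec 0 (1/2)); [ring| lra]. Qed.

Lemma m_fun_1 : m_fun 1 = 0.
Proof. unfold m_fun; destruct (Rlt_dec 1 (1/2)); [lra| ring]. Qed.

Theorem theorem10
  (J : R -> Prop) (h : R -> R)
  (HJ : is_interval J)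
  (HJ01 : forall t, 0 < t < 1 -> J t)
  (Hh_nonneg : forall t, J t -> 0 <= h t)
  (Hh_nonzero : exists t, J t /\ h t <> 0)
  (Hh_int : lebesgue_integrable h 0 1)
  (I : R -> Prop) (HI : is_interval I) (HI0 : forall x, I x -> 0 <= x)
  (a b : R) (Ha : interior I a) (Hb : interior I b) (Hab : a < b)
  (f f1 f2 : R -> R)
  (Hf1 : forall x, interior I x -> derivable_pt_lim f x (f1 x))
  (Hf2 : forall x, interior I x -> derivable_pt_lim f1 x (f2 x))
  (Hf2_L1 : lebesgue_integrable f2 a b)
  (Hconv : h_convex h (fun x => Rabs (f2 x)) (fun x => a <= x <= b)) :
  exists If Imh : R,
    HK_integral f a b If /\
    HK_integral (fun t => m_fun t * h t) 0 1 Imh /\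
    Rabs (If / (b - a) - f ((a + b) / 2))
      <= (b - a) ^ 2 * ((Rabs (f2 a) + Rabs (f2 b)) / 2) * Imh.
Proof.
  destruct Hh_int as [[w Hw] [W HW]].
  destruct (HK_mult h m_fun 0 1 w W ltac:(lra) Hw HW) as [Imh HImh].
  { intros x Hx eta Heta. exists eta; split; auto. intros t Ht Htx.
    eapply Rle_trans; [apply m_fun_lip; lra|]. lra. }
  assert (Hint : forall y, a <= y <= b -> interior I y).
  { destruct Ha as [da Hda]. destruct Hb as [db Hdb].
    assert (Ia : I a) by (apply Hda; unfold disc; rewrite Rminus_diag, Rabs_R0; apply cond_pos).
    assert (Ib : I b) by (apply Hdb; unfold disc; rewrite Rminus_diag, Rabs_R0; apply cond_pos).
    intros y Hy.
    exists (mkposreal _ (Rmin_pos _ _ (cond_pos da) (cond_pos db))).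
    intros z Hz. unfold disc in Hz; simpl in Hz.
    pose proof (Rmin_l da db). pose proof (Rmin_r da db).
    apply abs_lt_iff in Hz.
    destruct (Rlt_le_dec z a) as [Hza|Hza].
    - apply Hda. unfold disc. apply abs_lt_iff; lra.
    - destruct (Rlt_le_dec b z) as [Hzb|Hzb].
      + apply Hdb. unfold disc. apply abs_lt_iff; lra.
      + apply (HI a z b); auto. }
  assert (C0 : forall x0, a <= x0 <= b -> continuity_pt f x0).
  { intros x0 Hx0. apply derivable_continuous_pt.
    exists (f1 x0). apply Hf1, Hint; auto. }
  set (F := primitive (Rlt_le _ _ Hab) (FTC_P1 (Rlt_le _ _ Hab) C0)).
  assert (DF : forall x, a <= x <= b -> derivable_pt_lim F x (f x)).
  { intros x Hx. apply RiemannInt_P28; auto. }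
  clearbody F.
  exists (F b - F a), Imh.
  split; [|split; [exact HImh|]].
  { apply ftc_gauge; [lra|]. apply straddle_of_loc. intros x Hx eps Heps.
    apply (straddle_loc F F F x (f x) 1); auto; lra. }

  destruct Hconv as [_ Hconv].
  set (A := Rabs (f2 a)). set (B := Rabs (f2 b)).
  pose (xt := fun t => t * a + (1 - t) * b).
  assert (Hxt : forall t, 0 <= t <= 1 -> a <= xt t <= b).
  { intros t Ht; unfold xt; split; nra. }
  pose (u := fun t => f (t * a + (1 - t) * b)).
  pose (w1 := fun t => f1 (t * a + (1 - t) * b)).
  pose (U := fun t => F (t * a + (1 - t) * b) * / (a - b)).
  assert (Du : forall t, 0 <= t <= 1 -> derivable_pt_lim u t (f1 (xt t) * (a - b))).
  { intros t Ht. unfold u. apply dpl_affine. apply Hf1, Hint. apply Hxt; auto. }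
  assert (Dw : forall t, 0 <= t <= 1 -> derivable_pt_lim w1 t (f2 (xt t) * (a - b))).
  { intros t Ht. unfold w1. apply dpl_affine. apply Hf2, Hint. apply Hxt; auto. }
  assert (DU : forall t, 0 <= t <= 1 -> derivable_pt_lim U t (u t)).
  { intros t Ht. unfold U. eapply dpl_eq.
    - apply dpl_mult; [apply dpl_affine; apply DF; apply Hxt; auto| apply dpl_const].
    - unfold u. cbv beta. field. lra. }
  pose (P1 := fun t => t * t * (a - b) * w1 t - 2 * t * u t + 2 * U t).
  pose (P2 := fun t => (1 - t) * (1 - t) * (a - b) * w1 t + 2 * (1 - t) * u t + 2 * U t).
  assert (DP1 : forall t, 0 <= t <= 1 -> derivable_pt_lim P1 t (t * t * ((a - b) ^ 2 * f2 (xt t)))).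
  { intros t Ht. unfold P1. eapply dpl_eq.
    - apply dpl_plus; [apply dpl_minus|].
      + apply dpl_mult; [|apply Dw; auto].
        apply dpl_mult; [apply dpl_mult; apply dpl_id| apply dpl_const].
      + apply dpl_mult; [apply dpl_mult; [apply dpl_const| apply dpl_id]| apply Du; auto].
      + apply dpl_mult; [apply dpl_const| apply DU; auto].
    - unfold w1, u. cbv beta. fold (xt t). ring. }
  assert (DP2 : forall t, 0 <= t <= 1 -> derivable_pt_lim P2 t ((1 - t) * (1 - t) * ((a - b) ^ 2 * f2 (xt t)))).
  { intros t Ht. unfold P2. eapply dpl_eq.
    - apply dpl_plus; [apply dpl_plus|].
      + apply dpl_mult; [|apply Dw; auto].
        apply dpl_mult; [apply dpl_mult; apply dpl_minus; [apply dpl_const|apply dpl_id|apply dpl_const|apply dpl_id]| apply dpl_const].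
      + apply dpl_mult; [apply dpl_mult; [apply dpl_const| apply dpl_minus; [apply dpl_const|apply dpl_id]]| apply Du; auto].
      + apply dpl_mult; [apply dpl_const| apply DU; auto].
    - unfold w1, u. cbv beta. fold (xt t). ring. }
  set (C := P1 (1/2) - P2 (1/2)).
  pose (P := fun t => if Rle_dec t (1/2) then P1 t else P2 t + C).
  pose (g := fun t => m_fun t * ((a - b) ^ 2 * f2 (xt t))).
  assert (HP : HK_integral g 0 1 (P 1 - P 0)).
  { apply ftc_gauge; [lra|]. apply straddle_of_loc. intros x Hx eps Heps.
    destruct (Rtotal_order x (1/2)) as [Hlt|[Heq|Hgt]].
    - apply (straddle_loc P P1 P1 x (g x) (1/2 - x)); try lra.
      + intros u0 Hu0. unfold P. destruct (Rle_dec u0 (1/2)); auto; lra.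
      + intros v0 Hv0. unfold P. destruct (Rle_dec v0 (1/2)); auto; lra.
      + eapply dpl_eq; [apply DP1; auto|]. unfold g, m_fun. destruct (Rlt_dec x (1/2)); [ring|lra].
      + eapply dpl_eq; [apply DP1; auto|]. unfold g, m_fun. destruct (Rlt_dec x (1/2)); [ring|lra].
    - subst x. apply (straddle_loc P P1 (fun t => P2 t + C) (1/2) (g (1/2)) 1); try lra.
      + intros u0 Hu0. unfold P. destruct (Rle_dec u0 (1/2)); auto; lra.
      + intros v0 Hv0. unfold P. destruct (Rle_dec v0 (1/2)); auto.
        assert (v0 = 1/2) by lra. subst v0. unfold C. ring.
      + eapply dpl_eq; [apply DP1; lra|]. unfold g, m_fun. destruct (Rlt_dec (1/2) (1/2)); [lra|field].
      + eapply dpl_eq; [apply dpl_plus; [apply DP2; lra| apply dpl_const]|].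
        unfold g, m_fun. destruct (Rlt_dec (1/2) (1/2)); [lra|ring].
    - apply (straddle_loc P (fun t => P2 t + C) (fun t => P2 t + C) x (g x) (x - 1/2)); try lra.
      + intros u0 Hu0. unfold P. destruct (Rle_dec u0 (1/2)); auto; lra.
      + intros v0 Hv0. unfold P. destruct (Rle_dec v0 (1/2)); auto; lra.
      + eapply dpl_eq; [apply dpl_plus; [apply DP2; lra| apply dpl_const]|].
        unfold g, m_fun. destruct (Rlt_dec x (1/2)); [lra|ring].
      + eapply dpl_eq; [apply dpl_plus; [apply DP2; lra| apply dpl_const]|].
        unfold g, m_fun. destruct (Rlt_dec x (1/2)); [lra|ring]. }
  pose (k := fun t => (b - a) ^ 2 * A * (m_fun t * h t) + (b - a) ^ 2 * B * (m_fun (1 - t) * h (1 - t))).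
  assert (HK : HK_integral k 0 1 ((b - a) ^ 2 * A * Imh + (b - a) ^ 2 * B * Imh)).
  { apply HK_plus; apply HK_scal; [exact HImh| exact (HK_refl _ _ HImh)]. }
  assert (Hgk : forall t, 0 <= t <= 1 -> Rabs (g t) <= k t).
  { intros t Ht. unfold g, k. rewrite m_fun_sym.
    destruct (Req_dec t 0) as [E0|N0].
    { subst t. rewrite m_fun_0. rewrite !Rmult_0_l, Rabs_R0. lra. }
    destruct (Req_dec t 1) as [E1|N1].
    { subst t. rewrite m_fun_1. rewrite !Rmult_0_l, Rabs_R0. lra. }
    specialize (Hconv a b t ltac:(lra) ltac:(lra) ltac:(lra)). cbv beta in Hconv.
    fold A B in Hconv. fold (xt t) in Hconv.
    pose proof (m_fun_nonneg t).
    rewrite Rabs_mult, (Rabs_right (m_fun t)) by lra.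
    rewrite Rabs_mult, (Rabs_right ((a - b) ^ 2)) by (apply Rle_ge, pow2_ge_0).
    replace ((a - b) ^ 2) with ((b - a) ^ 2) by ring.
    replace ((b - a) ^ 2 * A * (m_fun t * h t) + (b - a) ^ 2 * B * (m_fun t * h (1 - t)))
      with (m_fun t * ((b - a) ^ 2 * (h t * A + h (1 - t) * B))) by ring.
    apply Rmult_le_compat_l; auto. apply Rmult_le_compat_l; [apply pow2_ge_0|]. exact Hconv. }
  assert (Hbound := HK_mono g k 0 1 _ _ ltac:(lra) HP HK Hgk).
  assert (X0 : xt 0 = b) by (unfold xt; ring).
  assert (X1 : xt 1 = a) by (unfold xt; ring).
  assert (Xh : xt (1/2) = (a + b) / 2) by (unfold xt; field).
  assert (E0 : P 0 = 2 * (F b * / (a - b))).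
  { unfold P. destruct (Rle_dec 0 (1/2)); [|lra]. unfold P1, U. fold (xt 0). rewrite X0. ring. }
  assert (E1 : P 1 = 2 * (F a * / (a - b)) - 2 * f ((a + b) / 2)).
  { unfold P. destruct (Rle_dec 1 (1/2)); [lra|]. unfold C, P2, P1, U, u.
    fold (xt 1). fold (xt (1/2)). rewrite X1, Xh. field. lra. }
  replace ((F b - F a) / (b - a) - f ((a + b) / 2)) with ((P 1 - P 0) * / 2)
    by (rewrite E0, E1; field; lra).
  rewrite Rabs_mult, (Rabs_right (/ 2)) by lra.
  assert (EE : (b - a) ^ 2 * A * Imh + (b - a) ^ 2 * B * Imh = 2 * ((b - a) ^ 2 * ((A + B) / 2) * Imh)) by field.
  lra.
Qed.
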